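(* Let $C$ and $D$ be reflexive symmetric cycles of lengths $m$ and $n$ respectively, with $4 \leq n \leq m$. For an integer $w$, let $\mathrm{Hom}_w(C,D)$ be the subgraph of $\mathrm{Hom}(C,D)$ induced by the homomorphisms of wind $w$. Then $\mathrm{Hom}_w(C,D)$ consists of (1) a single component if $0 \leq |w| < m/n$; (2) $n$ isolated vertices if $0 < |w| = m/n$; and $\mathrm{Hom}_w(C,D)$ is empty if $m/n < |w|$.
   Context: A digraph is a binary relation $\to$ on a finite vertex set; $uv$ is an arc if $u \to v$, the arc $uu$ is a loop, and a digraph is reflexive if every vertex has a loop. A cycle of length $m\ge 3$ is written $C = c_0c_1\dots c_{m-1}c_0$ (indices mod $m$), its edges being the pairs $c_ic_{i+1}$; it is symmetric if $c_i \to c_{i+1}$ and $c_{i+1}\to c_i$ for every $i$. The cycle $D$ of length $n$ is written $D=(0)(1)\dots(n-1)(0)$, its vertices being the integers mod $n$. A homomorphism $\phi: C \to D$ is a map on vertices with $u \to v$ implying $\phi(u)\to\phi(v)$. $\mathrm{Hom}(C,D)$ is the digraph whose vertices are the homomorphisms $C\to D$, with $\phi \to \phi'$ iff for all $u \to v$ in $C$, $\phi(u) \to \phi'(v)$; components are components of its underlying graph (two maps adjacent if $\phi\to\phi'$ or $\phi'\to\phi$). Under $\phi$, the edge $c_ic_{i+1}$ is increasing, stationary or decreasing according as $\phi(c_{i+1}) - \phi(c_i)$ is $1$, $0$ or $-1$ (mod $n$). The increase of $\phi$ is the number of increasing edges minus the number of decreasing edges, and the wind of $\phi$ is its increase divided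 by $n$. *)

(* Defs.v *)
From mathcomp Require Import all_boot all_order all_algebra.
Set Implicit Arguments. Unset Strict Implicit. Unset Printing Implicit Defensive.
Import Order.TTheory GRing.Theory Num.Theory.

Definition cyc_arc (k : nat) (u v : 'I_k) : bool :=
  [|| v == u, v == ordS u | u == ordS v].

Definition is_hom (m n : nat) (f : {ffun 'I_m -> 'I_n}) : bool :=
  [forall u, forall v, cyc_arc u v ==> cyc_arc (f u) (f v)].

Definition hom_arc (m n : nat) (f g : {ffun 'I_m -> 'I_n}) : bool :=
  [forall u, forall v, cyc_arc u v ==> cyc_arc (f u) (g v)].

Definition hom_adj (m n : nat) (f g : {ffun 'I_m -> 'I_n}) : bool :=
  hom_arc f g || hom_arc g f.

Definition increase (m n : nat) (f : {ffun 'I_m -> 'I_n}) : int :=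
  (#|[set i : 'I_m | f (ordS i) == ordS (f i)]|%:Z
   - #|[set i : 'I_m | f i == ordS (f (ordS i))]|%:Z)%R.

Definition wind (m n : nat) (f : {ffun 'I_m -> 'I_n}) : rat :=
  ((increase f)%:~R / n%:R)%R.

Definition Homw (m n : nat) (w : int) : {set {ffun 'I_m -> 'I_n}} :=
  [set f | is_hom f & wind f == (w%:~R)%R].

Definition Homw_adj (m n : nat) (w : int) : rel {ffun 'I_m -> 'I_n} :=
  fun f g => [&& f \in Homw m n w, g \in Homw m n w & hom_adj f g].

(* Main.v *)
Require Import Defs.
From mathcomp Require Import all_boot all_order all_algebra.
From mathcomp Require Import zify ring.
Import Order.TTheory GRing.Theory Num.Theory.
Section RatLemmas.
Local Open Scope ring_scope.

Lemma natrZ' (k : nat) : ((k%:Z)%:~R : rat) = k%:R.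
Proof. by []. Qed.
Lemma rat_lt (n m : nat) (a : int) : (0 < n)%N -> (a%:~R < (m%:R / n%:R : rat)) = (a * n%:Z < m%:Z).
Proof. move=> hn. rewrite ltr_pdivlMr ?ltr0n // -natrZ' -natrZ' -intrM ltr_int. by []. Qed.
Lemma rat_gt (n m : nat) (a : int) : (0 < n)%N -> ((m%:R / n%:R : rat) < a%:~R) = (m%:Z < a * n%:Z).
Proof. move=> hn. rewrite ltr_pdivrMr ?ltr0n // -natrZ' -natrZ' -intrM ltr_int. by []. Qed.
Lemma rat_eq (n m : nat) (a : int) : (0 < n)%N -> (a%:~R = (m%:R / n%:R : rat)) <-> (a * n%:Z = m%:Z).
Proof. move=> hn. have nz : (n%:R : rat) != 0 by rewrite pnatr_eq0 -lt0n.
split => [e|e].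
  apply/(@intr_inj rat). by rewrite intrM e natrZ' divfK.
by rewrite -natrZ' -e intrM natrZ' mulfK.
Qed.

End RatLemmas.
Section S.
Local Set Implicit Arguments.
Local Unset Strict Implicit.
Local Open Scope ring_scope.

Variable n : nat.
Hypothesis hn : (4 <= n)%N.

Lemma n_gt0 : (0 < n)%N. Proof. by apply: leq_trans hn. Qed.

Lemma toI_subproof (x : int) : (absz (x %% n)%Z < n)%N.
Proof.
have h0 : (0 <= (x %% n)%Z) by apply: modz_ge0; rewrite eqz_nat -lt0n n_gt0.
have h1 : ((x %% n)%Z < n) by apply: ltz_pmod; rewrite ltz_nat n_gt0.
lia.
Qed.

Definition toI (x : int) : 'I_n := Ordinal (toI_subproof x).

Lemma dvd_small (z : int) : (n %| z)%Z -> `|z| < n%:Z -> z = 0.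
Proof.
rewrite dvdzE => hd hz.
case: (posnP (absz z)) => [/eqP|hp]; first by rewrite absz_eq0 => /eqP.
have := dvdn_leq hp hd. lia.
Qed.

Lemma toIE x y : (toI x == toI y) = (n %| x - y)%Z.
Proof.
rewrite -eqz_mod_dvd -val_eqE /=.
have h0 : forall x : int, (0 <= (x %% n)%Z) by move=> ?; apply: modz_ge0; rewrite eqz_nat -lt0n n_gt0.
have := h0 x; have := h0 y. lia.
Qed.

Lemma toI_val (a : 'I_n) : toI (val a) = a.
Proof. apply: val_inj => /=. by rewrite modz_nat modn_small. Qed.

Lemma ordS_toI x : ordS (toI x) = toI (x + 1).
Proof.
apply/eqP; rewrite -(toI_val (ordS _)) toIE /=.
idtac.
have h0 : forall x : int, (0 <= (x %% n)%Z) by move=> ?; apply: modz_ge0; rewrite eqz_nat -lt0n n_gt0.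
have e : ((`|(x %% n)%Z|.+1 %% n)%N : int) = (((x %% n)%Z + 1) %% n)%Z.
  by rewrite -modz_nat -addn1 PoszD gez0_abs.
rewrite e -eqz_mod_dvd. apply/eqP. by rewrite modz_mod modzDml.
Qed.


Lemma toI_arc x y : cyc_arc (toI x) (toI y) = [|| (n %| y - x)%Z, (n %| y - x - 1)%Z | (n %| y - x + 1)%Z].
Proof.
rewrite /cyc_arc !ordS_toI !toIE.
have -> : x - (y + 1) = - (y - x + 1) by ring.
by rewrite rpredN opprD addrA.
Qed.

Lemma arc_near x y : `|y - x| <= 1 -> cyc_arc (toI x) (toI y).
Proof.
move=> h; rewrite toI_arc.
have : (y - x == 0) || (y - x - 1 == 0) || (y - x + 1 == 0) by lia.
by case/orP => [/orP[]|] /eqP ->; rewrite dvdz0 ?orbT.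
Qed.

Lemma inc_near x y : `|y - x| <= 1 -> (toI y == ordS (toI x)) = (y - x == 1).
Proof.
move=> h; rewrite ordS_toI toIE.
apply/idP/idP => [hd|/eqP e]; last by have -> : y - (x + 1) = 0 by lia.
have : y - (x + 1) = 0 by apply: dvd_small hd _; lia.
lia.
Qed.

Lemma dec_near x y : `|y - x| <= 1 -> (toI x == ordS (toI y)) = (y - x == -1).
Proof.
move=> h; rewrite ordS_toI toIE.
apply/idP/idP => [hd|/eqP e]; last by have -> : x - (y + 1) = 0 by lia.
have : x - (y + 1) = 0 by apply: dvd_small hd _; lia.
lia.
Qed.

Variable m : nat.
Hypothesis hnm : (n <= m)%N.

Lemma m_ge4 : (4 <= m)%N. Proof. exact: leq_trans hn hnm. Qed.

Definition valid (F : nat -> int) := forall i, (i < m)%N -> `|F i.+1 - F i| <= 1.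
Definition closed (F : nat -> int) := (n %| F m - F 0%N)%Z.
Definition hom_of (F : nat -> int) : {ffun 'I_m -> 'I_n} := [ffun i : 'I_m => toI (F i)].

Lemma hom_of_ordS F (i : 'I_m) : closed F -> hom_of F (ordS i) = toI (F i.+1).
Proof.
move=> hc; rewrite !ffunE /=.
have := ltn_ord i; rewrite leq_eqVlt => /orP[/eqP e|lt].
  rewrite e modnn; apply/eqP; rewrite toIE -rpredN. by rewrite opprB.
by rewrite modn_small.
Qed.


Lemma arc_hom_of F G : closed F -> closed G ->
  (forall i, (i < m)%N -> [/\ `|G i - F i| <= 1, `|G i.+1 - F i| <= 1 & `|G i - F i.+1| <= 1]) ->
  hom_arc (hom_of F) (hom_of G).
Proof.
move=> cF cG h; apply/forallP => u; apply/forallP => v; apply/implyP.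
rewrite /cyc_arc => /or3P[/eqP->|/eqP->|/eqP->].
- rewrite !ffunE; apply: arc_near; by case: (h u (ltn_ord u)).
- rewrite hom_of_ordS // ffunE; apply arc_near; by case: (h u (ltn_ord u)).
- rewrite hom_of_ordS // ffunE; apply arc_near; by case: (h v (ltn_ord v)).
Qed.

Lemma hom_of_hom F : valid F -> closed F -> is_hom (hom_of F).
Proof.
move=> vF cF; apply: (arc_hom_of cF cF) => i hi.
have := vF i hi; split; [by rewrite subrr | done | by rewrite distrC].
Qed.

Lemma card_sumZ (P : pred 'I_m) : (#|[set i | P i]|%:Z) = \sum_(i < m) (if P i then 1 else 0 : int).
Proof.
rewrite -sum1_card (big_morph Posz PoszD erefl) big_mkcond /=.
by apply: eq_bigr => i _; rewrite inE.
Qed.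

Lemma increase_hom_of F : valid F -> closed F -> increase (hom_of F) = F m - F 0%N.
Proof.
move=> vF cF; rewrite /increase !card_sumZ -sumrB.
transitivity (\sum_(i < m) (F i.+1 - F i)).
  apply: eq_bigr => i _; rewrite !hom_of_ordS // !ffunE inc_near ?dec_near;
    try (have := vF i (ltn_ord i); lia).
  have := vF i (ltn_ord i).
  case: eqP; case: eqP; lia.
by rewrite -(big_mkord xpredT (fun i => F i.+1 - F i)) telescope_sumr.
Qed.


Lemma m_gt0 : (0 < m)%N. Proof. by apply: leq_trans m_ge4. Qed.

Definition step (f : {ffun 'I_m -> 'I_n}) (i : 'I_m) : int :=
  if f (ordS i) == ordS (f i) then 1 else if f i == ordS (f (ordS i)) then -1 else 0.

Lemma step_spec f i x : is_hom f -> toI x = f i -> toI (x + step f i) = f (ordS i).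
Proof.
move=> hf hx; rewrite /step.
case: ifP => [/eqP ->|e1]; first by rewrite -ordS_toI hx.
case: ifP => [/eqP e|e2].
  apply: ordS_inj; rewrite -e ordS_toI -hx; congr toI; ring.
have : cyc_arc (f i) (f (ordS i)).
  by move/forallP: hf => /(_ i) /forallP /(_ (ordS i)) /implyP; apply; rewrite /cyc_arc eqxx orbT.
by rewrite /cyc_arc e1 e2 !orbF => /eqP ->; rewrite addr0.
Qed.

Lemma step_le1 f i : `|step f i| <= 1.
Proof. rewrite /step; by case: ifP => _ //; case: ifP. Qed.

Definition o0 : 'I_m := Ordinal m_gt0.

Definition liftF (f : {ffun 'I_m -> 'I_n}) (k : nat) : int :=
  (val (f o0))%:Z + \sum_(i < m | (i < k)%N) step f i.

Lemma liftF_S f k (hk : (k < m)%N) : liftF f k.+1 = liftF f k + step f (Ordinal hk).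
Proof.
rewrite /liftF -addrA; congr (_ + _).
rewrite (bigD1 (Ordinal hk)) //= addrC; congr (_ + _).
apply: eq_bigl => i; rewrite ltnS -val_eqE /= andbC.
by case: ltngtP.
Qed.

Lemma liftF_0 f : liftF f 0 = val (f o0).
Proof. by rewrite /liftF big_pred0 ?addr0. Qed.

Lemma liftF_spec f : is_hom f -> forall k (hk : (k < m)%N),
  toI (liftF f k) = f (Ordinal hk) /\ toI (liftF f k.+1) = f (ordS (Ordinal hk)).
Proof.
move=> hf; elim=> [|k IH] hk.
  have e : toI (liftF f 0) = f (Ordinal hk).
    rewrite liftF_0 toI_val; apply: congr1; exact: val_inj.
  by split => //; rewrite liftF_S; apply: step_spec.
have hk' : (k < m)%N by apply: ltnW.
have e : toI (liftF f k.+1) = f (Ordinal hk).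
  rewrite (proj2 (IH hk')); apply: congr1; apply: val_inj => /=; exact: modn_small.
by split => //; rewrite liftF_S; apply: step_spec.
Qed.

Lemma lift_hom f : is_hom f -> [/\ valid (liftF f), closed (liftF f) & hom_of (liftF f) = f].
Proof.
move=> hf; split.
- by move=> i hi; rewrite liftF_S addrC addKr step_le1.
- have hm : (m.-1 < m)%N by rewrite prednK // m_gt0.
  have := proj2 (liftF_spec hf hm); rewrite prednK ?m_gt0 // => e1.
  have e2 : ordS (Ordinal hm) = o0 by apply: val_inj => /=; rewrite prednK ?m_gt0 // modnn.
  rewrite /closed -toIE e1 e2 liftF_0 toI_val //.
- apply/ffunP => i; rewrite ffunE; have := proj1 (liftF_spec hf (ltn_ord i)).
  by move=> ->; apply: congr1; apply: val_inj.
Qed.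


Lemma natrZ (k : nat) : ((k%:Z)%:~R : rat) = k%:R.
Proof. by []. Qed.

Variable w : int.

Lemma wind_eq (f : {ffun 'I_m -> 'I_n}) : (wind f == w%:~R) = (increase f == w * n%:Z).
Proof.
have nz : (n%:R : rat) != 0 by rewrite pnatr_eq0 -lt0n n_gt0.
apply/eqP/eqP => [e|e].
  apply/(@intr_inj rat); by rewrite intrM -e /wind natrZ divfK.
by rewrite /wind e intrM natrZ mulfK.
Qed.

Lemma valid_bound F : valid F -> forall j k, (k <= j <= m)%N -> `|F j - F k| <= (j - k)%N.
Proof.
move=> vF; elim=> [|j IH] k /andP[hk hj].
  by move: hk; rewrite leqn0 => /eqP ->; rewrite subrr.
move: hk; rewrite leq_eqVlt => /orP[/eqP ->|hk]; first by rewrite subrr subnn.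
have := IH k; rewrite -ltnS hk /= => /(_ (ltnW hj)) h.
have := vF j hj. lia.
Qed.

Lemma homw_P F : valid F -> F m - F 0%N = w * n%:Z -> hom_of F \in Homw m n w.
Proof.
move=> vF e; have cF : closed F by rewrite /closed e dvdz_mull.
by rewrite inE hom_of_hom //= wind_eq increase_hom_of // e.
Qed.

Lemma homw_lift f : f \in Homw m n w ->
  [/\ valid (liftF f), liftF f m - liftF f 0%N = w * n%:Z, hom_of (liftF f) = f
    & liftF f 0%N = val (f o0)].
Proof.
rewrite inE wind_eq => /andP[hf /eqP e].
case: (lift_hom hf) => vF cF hF; split => //; last exact: liftF_0.
by rewrite -increase_hom_of // hF.
Qed.

Lemma homw_bound f : f \in Homw m n w -> `|w * n%:Z| <= m%:Z.
Proof.
case/homw_lift => vF e _ _; rewrite -e.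
have := valid_bound vF (j := m) (k := 0); rewrite subn0 leqnn; apply => //.
Qed.


Lemma ex_max N (P : pred nat) (h : nat -> int) k0 : (k0 <= N)%N -> P k0 ->
  exists u, [/\ (u <= N)%N, P u & forall v, (v <= N)%N -> P v -> h v <= h u].
Proof.
elim: N k0 => [|N IH] k0 hk Pk.
  move: hk; rewrite leqn0 => /eqP e; subst k0.
  by exists 0%N; split => // v; rewrite leqn0 => /eqP ->.
case: (boolP (has P (iota 0 N.+1))) => [/hasP[k]|hno].
  rewrite mem_iota add0n => /andP[_ hkN] Pk'.
  case: (IH k hkN Pk') => u [huN Pu hu].
  case: (boolP (P N.+1 && (h u < h N.+1))) => [/andP[PN hlt]|hnot].
    exists N.+1; split => // v; rewrite leq_eqVlt => /orP[/eqP -> //|hv] Pv.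
    by apply: le_trans (hu v hv Pv) (ltW hlt).
  exists u; split => //; first exact: leqW.
  move=> v; rewrite leq_eqVlt => /orP[/eqP -> PN|hv Pv]; last exact: hu.
  by move: hnot; rewrite PN /= -leNgt.
have ek : k0 = N.+1.
  apply/eqP; move: hk; rewrite leq_eqVlt => /orP[//|hk].
  by move/hasPn: hno => /(_ k0); rewrite mem_iota add0n hk Pk => /(_ isT).
subst k0; exists N.+1; split => // v; rewrite leq_eqVlt => /orP[/eqP -> //|hv] Pv.
by move/hasPn: hno => /(_ v); rewrite mem_iota add0n hv Pv => /(_ isT).
Qed.

Lemma site_arc F G : valid F -> valid G -> closed F -> closed G ->
  (forall i, (i <= m)%N -> `|G i - F i| <= 1) ->
  (forall i, (i < m)%N -> F i = G i \/ F i.+1 = G i.+1) ->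
  hom_arc (hom_of F) (hom_of G).
Proof.
move=> vF vG cF cG h1 h2; apply: arc_hom_of => // i hi.
have a := h1 i (ltnW hi); have b := h1 i.+1 hi; have c := vF i hi; have d := vG i hi.
case: (h2 i hi) => e; split => //; lia.
Qed.

Definition dist (F G : nat -> int) : nat := \sum_(i < m.+1) `|F i - G i|%N.

Lemma distC F G : dist F G = dist G F.
Proof. by apply: eq_bigr => i _; rewrite distnC. Qed.


Lemma move_down F G : valid F -> valid G -> closed F -> F 0%N = G 0%N -> F m = G m ->
  (exists2 u, (u <= m)%N & G u < F u) ->
  exists F', [/\ valid F', F' 0%N = F 0%N, F' m = F m, (dist F' G < dist F G)%N
             & hom_arc (hom_of F) (hom_of F')].
Proof.
move=> vF vG cF e0 em [u0 hu0 hlt].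
have [u1 [hu1 _ hmax1]] := @ex_max m predT (fun k => F k - G k) u0 hu0 isT.
set D := F u1 - G u1.
have hD : 0 < D by have := hmax1 u0 hu0 isT; rewrite /D /=; lia.
have [u [hu /eqP Pu hmax]] := @ex_max m (fun k => F k - G k == D) F u1 hu1 (eqxx _).
have hmaxD : forall v, (v <= m)%N -> F v - G v <= D by move=> v hv; exact: hmax1 v hv isT.
have u0' : u != 0%N by apply/eqP => e; subst u; move: Pu; rewrite e0 subrr; lia.
have um : u != m by apply/eqP => e; subst u; move: Pu; rewrite em subrr; lia.
have hum : (u < m)%N by rewrite ltn_neqAle um.
have upos : (0 < u)%N by rewrite lt0n.
have hR : F u.+1 <= F u.
  rewrite leNgt; apply/negP => hgt.
  have a := vF u hum; have b := vG u hum; have c := hmaxD u.+1 hum.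
  have eq1 : F u.+1 - G u.+1 == D by lia.
  have := hmax u.+1 hum eq1; lia.
have hL : F u.-1 <= F u.
  rewrite leNgt; apply/negP => hgt.
  have hu' : (u.-1 < m)%N by rewrite (leq_ltn_trans (leq_pred u)).
  have a := vF u.-1 hu'; have b := vG u.-1 hu'; have c := hmaxD u.-1 (ltnW hu').
  rewrite prednK // in a b.
  have eq1 : F u.-1 - G u.-1 == D by lia.
  have := hmax u.-1 (ltnW hu') eq1; lia.
pose F' := fun k => if k == u then F u - 1 else F k.
have vF' : valid F'.
  move=> i hi; rewrite /F'.
  have a := vF i hi.
  case: ifP => /eqP h1; case: ifP => /eqP h2.
  - lia.
  - subst u; move: hL => /= hL; lia.
  - subst u; lia.
  - exact: a.
have cF' : closed F'.
  by rewrite /closed /F' eq_sym (negbTE um) eq_sym (negbTE u0').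
exists F'; split => //.
- by rewrite /F' eq_sym (negbTE u0').
- by rewrite /F' eq_sym (negbTE um).
- rewrite /dist (bigD1 (Ordinal (hu : (u < m.+1)%N))) //= [X in (_ < X)%N](bigD1 (Ordinal (hu : (u < m.+1)%N))) //=.
  have -> : \sum_(i < m.+1 | i != Ordinal (hu : (u < m.+1)%N)) `|F' i - G i|%N =
            \sum_(i < m.+1 | i != Ordinal (hu : (u < m.+1)%N)) `|F i - G i|%N.
    apply: eq_bigr => i hi; rewrite /F' ifN //.
  rewrite /F' eqxx ltn_add2r; lia.
- apply: site_arc => //.
  + move=> i hi; rewrite /F'; case: eqP => [->|_]; last by rewrite subrr. lia.
  + move=> i hi; rewrite /F'; case: (eqVneq i u) => [->|hiu]; last by left.
    by right; rewrite ifN //; apply/eqP; lia.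
Qed.


Lemma adj_sym : symmetric (@Homw_adj m n w).
Proof. by move=> f g; rewrite /Homw_adj /hom_adj andbCA orbC. Qed.

Lemma edge F G : valid F -> valid G -> F m - F 0%N = w * n%:Z -> G m - G 0%N = w * n%:Z ->
  hom_arc (hom_of F) (hom_of G) -> connect (@Homw_adj m n w) (hom_of F) (hom_of G).
Proof.
move=> vF vG eF eG ha; apply: connect1.
by rewrite /Homw_adj !homw_P // /hom_adj ha.
Qed.

Lemma conn_same F G : valid F -> valid G -> F m - F 0%N = w * n%:Z -> F 0%N = G 0%N -> F m = G m ->
  connect (@Homw_adj m n w) (hom_of F) (hom_of G).
Proof.
move=> vF vG eF e0 em; move: (ltnSn (dist F G)); move: {2}(dist F G).+1 => k.
elim: k F G vF vG eF e0 em => [//|k IH] F G vF vG eF e0 em hd.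
have eG : G m - G 0%N = w * n%:Z by rewrite -em -e0.
have cF : closed F by rewrite /closed eF dvdz_mull.
have cG : closed G by rewrite /closed eG dvdz_mull.
case: (boolP [forall i : 'I_m.+1, F i == G i]) => [/forallP heq|].
  have -> : hom_of F = hom_of G.
    apply/ffunP => i; rewrite !ffunE.
    by rewrite (eqP (heq (Ordinal (ltnW (ltn_ord i) : (i < m.+1)%N)))).
  exact: connect0.
move/forallPn => [i]; case: ltgtP => // hlt _.
- have [G' [vG' e0' em' hd' ha]] := move_down vG vF cG (esym e0) (esym em) (ex_intro2 _ _ (val i) (ltn_ord i) hlt).
  apply: connect_trans (_ : connect _ (hom_of G') _).
    apply: IH => //; first by rewrite e0' -e0.
      by rewrite em'.
    by have := distC F G'; have := distC G F; lia.
  rewrite (sym_connect_sym adj_sym).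
  apply: edge => //; by rewrite em' e0'.
- have [F' [vF' e0' em' hd' ha]] := move_down vF vG cF e0 em (ex_intro2 _ _ (val i) (ltn_ord i) hlt).
  apply: connect_trans (_ : connect _ (hom_of F') _).
    apply: edge => //; by rewrite em' e0'.
  apply: IH => //; first by rewrite em' e0'.
    by rewrite e0'.
    by rewrite em'.
  lia.
Qed.


Section Part1.
Hypothesis hD : `|w * n%:Z| < m%:Z.

Definition Hp (a : int) (k : nat) : int :=
  a + (if 0 <= w * n%:Z then (minn k (absz (w * n%:Z)))%:Z else - (minn k.-1 (absz (w * n%:Z)))%:Z).

Definition Hp' (a : int) (k : nat) : int := if (k == 0%N) || (k == m) then Hp a k + 1 else Hp a k.

Lemma Hp_valid a : valid (Hp a).
Proof. move=> i hi; rewrite /Hp; case: ifP => hs /=; lia. Qed.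

Lemma Hp_0 a : Hp a 0 = a.
Proof. rewrite /Hp; case: ifP => hs /=; lia. Qed.

Lemma Hp_m a : Hp a m - Hp a 0%N = w * n%:Z.
Proof. have := m_ge4; rewrite /Hp; case: ifP => hs /=; lia. Qed.

Lemma Hp'_valid a : valid (Hp' a).
Proof.
have := m_ge4 => h4.
move=> i hi; rewrite /Hp' /Hp.
case: (eqVneq i 0%N) => [->|h0] /=.
  rewrite (_ : (1 == m) = false); last by apply/eqP; lia.
  case: ifP => hs /=; lia.
case: (eqVneq i.+1 m) => [e|h1] /=.
  rewrite (_ : (i == m) = false); last by apply/eqP; lia.
  rewrite e; case: ifP => hs /=; lia.
rewrite (_ : (i == m) = false); last by apply/eqP; lia.
case: ifP => hs /=; lia.
Qed.

Lemma Hp'_0 a : Hp' a 0 = a + 1.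
Proof. by rewrite /Hp' /= Hp_0. Qed.

Lemma Hp'_m a : Hp' a m - Hp' a 0%N = w * n%:Z.
Proof.
have := m_ge4 => h4; rewrite /Hp' eqxx orbT /= -(Hp_m a); lia.
Qed.

Lemma Hp'_end a : Hp' a m = Hp (a + 1) m.
Proof. rewrite /Hp' /Hp eqxx orbT; lia. Qed.

Lemma Hp_arc a : hom_arc (hom_of (Hp a)) (hom_of (Hp' a)).
Proof.
have := m_ge4 => h4.
have e1 : Hp a m - Hp a 0%N = w * n%:Z := Hp_m a.
have e2 : Hp' a m - Hp' a 0%N = w * n%:Z := Hp'_m a.
apply: site_arc; rewrite ?/closed ?e1 ?e2 ?dvdz_mull //.
- exact: Hp_valid.
- exact: Hp'_valid.
- move=> i hi; rewrite /Hp'; case: ifP => hs; lia.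
- move=> i hi; rewrite /Hp'.
  case: (eqVneq i 0%N) => [->|h0] /=.
    by right; rewrite (_ : (1 == m) = false) //; apply/eqP; lia.
  by left; rewrite (_ : (i == m) = false) //; apply/eqP; lia.
Qed.


Lemma conn_shift a k : connect (@Homw_adj m n w) (hom_of (Hp a)) (hom_of (Hp (a + k%:Z))).
Proof.
elim: k => [|k IH]; first by rewrite addr0 connect0.
apply: connect_trans IH _.
apply: connect_trans (_ : connect _ (hom_of (Hp' (a + k%:Z))) _).
  apply: edge; [exact: Hp_valid|exact: Hp'_valid|exact: Hp_m|exact: Hp'_m|exact: Hp_arc].
apply: conn_same; [exact: Hp'_valid|exact: Hp_valid|exact: Hp'_m| |].
  rewrite Hp'_0 Hp_0; lia.
rewrite Hp'_end; congr Hp; lia.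
Qed.

Lemma homw_connect f g : f \in Homw m n w -> g \in Homw m n w ->
  connect (@Homw_adj m n w) f g.
Proof.
wlog: f g / (val (f o0) <= val (g o0))%N.
  move=> H hf hg; case: (leqP (val (f o0)) (val (g o0))) => h; first exact: H.
  rewrite (sym_connect_sym adj_sym); apply: H => //; exact: ltnW.
move=> hle hf hg.
case: (homw_lift hf) => vF eF hF F0; case: (homw_lift hg) => vG eG hG G0.
set a : int := (val (f o0))%:Z.
set k := (val (g o0) - val (f o0))%N.
apply: connect_trans (_ : connect _ (hom_of (Hp a)) _).
  rewrite -[X in connect _ X _]hF; apply: conn_same => //; first exact: Hp_valid.
    by rewrite Hp_0.
  have := Hp_m a; rewrite Hp_0; lia.
apply: connect_trans (conn_shift a k) _.
rewrite -[X in connect _ _ X]hG (sym_connect_sym adj_sym).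
apply: conn_same => //; first exact: Hp_valid.
  rewrite Hp_0 G0 /a /k; lia.
have := Hp_m (a + k%:Z); rewrite Hp_0 /a /k; lia.
Qed.

Lemma homw_nonempty : Homw m n w != set0.
Proof.
apply/set0Pn; exists (hom_of (Hp 0)); apply: homw_P; [exact: Hp_valid|exact: Hp_m].
Qed.


End Part1.

Section Part2.
Hypothesis hw : `|w * n%:Z| = m%:Z.

Definition sg : int := if 0 <= w then 1 else -1.

Lemma sgE : w * n%:Z = sg * m%:Z.
Proof. have := n_gt0; rewrite /sg; case: ifP => hs; lia. Qed.

Definition gc (c : 'I_n) := hom_of (fun k => (val c)%:Z + sg * k%:Z).

Lemma gc_in c : gc c \in Homw m n w.
Proof.
apply: homw_P; last by rewrite sgE; lia.
by move=> i hi; rewrite /sg; case: ifP => hs; lia.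
Qed.

Lemma homw_gc f : f \in Homw m n w -> f = gc (f o0).
Proof.
case/homw_lift => vF eF hF F0.
rewrite -[LHS]hF; apply/ffunP => i; rewrite !ffunE; congr toI.
have hi := ltn_ord i.
have b1 := valid_bound vF (j := m) (k := i); rewrite leqnn andbT (ltnW hi) in b1.
have b2 := valid_bound vF (j := i) (k := 0%N); rewrite leq0n (ltnW hi) in b2.
have := b1 isT; have := b2 isT; move: eF; rewrite sgE -F0 /sg.
case: ifP => hs; lia.
Qed.

Lemma gc_inj : injective gc.
Proof.
move=> c c' e; have := congr1 (fun f : {ffun 'I_m -> 'I_n} => f o0) e; rewrite /= !ffunE /= !mulr0 !addr0 !toI_val //.
Qed.

Lemma homw_img : Homw m n w = gc @: setT.
Proof.
apply/setP => f; apply/idP/imsetP => [hf|[c _ ->]]; last exact: gc_in.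
by exists (f o0) => //; exact: homw_gc.
Qed.

Lemma homw_card : #|Homw m n w| = n.
Proof. by rewrite homw_img card_imset ?cardsT ?card_ord //; exact: gc_inj. Qed.

Lemma arc_ex x y : cyc_arc (toI x) (toI y) -> exists2 e, `|e| <= 1 & (n %| y - x + e)%Z.
Proof.
rewrite toI_arc => /or3P[h|h|h].
- by exists 0; rewrite ?addr0.
- by exists (-1).
- by exists 1.
Qed.

Lemma gc_arc c c' : hom_arc (gc c) (gc c') -> c = c'.
Proof.
move=> ha.
have get : forall u v : 'I_m, cyc_arc u v -> cyc_arc (gc c u) (gc c' v).
  by move=> u v huv; move/forallP: ha => /(_ u) /forallP /(_ v) /implyP; apply.
set o1 := ordS o0.
have v1 : val o1 = 1%N by rewrite /= modn_small // (leq_trans _ m_ge4).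
have h00 : cyc_arc o0 o0 by rewrite /cyc_arc eqxx.
have h01 : cyc_arc o0 o1 by rewrite /cyc_arc eqxx orbT.
have h10 : cyc_arc o1 o0 by rewrite /cyc_arc eqxx !orbT.
have a1 := get o0 o0 h00; have a2 := get o0 o1 h01; have a3 := get o1 o0 h10.
rewrite !ffunE v1 /= in a1 a2 a3.
case: (arc_ex a1) => e1 he1 d1; case: (arc_ex a2) => e2 he2 d2; case: (arc_ex a3) => e3 he3 d3.
have z1 := dvd_small (rpredB d2 d1); have z2 := dvd_small (rpredB d3 d1).
have hs : `|sg| = 1 by rewrite /sg; case: ifP.
have y1 : e1 = 0.
  have q1 := z1 ltac:(clear -he1 he2 hs hn; lia).
  have q2 := z2 ltac:(clear -he1 he3 hs hn; lia).
  clear -q1 q2 hs he1 he2 he3; lia.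
rewrite y1 in d1.
apply: ord_inj; have := ltn_ord c; have := ltn_ord c'.
have := dvd_small d1 => z3 h1 h2.
have := z3 ltac:(clear -h1 h2; lia). clear; lia.
Qed.

End Part2.

End S.

Theorem fact1p1 (m n : nat) (w : int) (hn : 4 <= n) (hnm : n <= m) :
  ( (`|w|%:~R < (m%:R / n%:R : rat))%R ->
      (@Homw m n w != set0) /\
      (forall f g, f \in @Homw m n w -> g \in @Homw m n w ->
         connect (@Homw_adj m n w) f g) )
  /\
  ( ((0 < `|w|)%R /\ (`|w|%:~R = (m%:R / n%:R : rat))%R) ->
      #|@Homw m n w| = n /\
      (forall f g, f \in @Homw m n w -> g \in @Homw m n w ->
         @hom_adj m n f g -> f = g) )
  /\
  ( ((m%:R / n%:R : rat) < `|w|%:~R)%R -> @Homw m n w = set0 ).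
Proof.
have n0 : (0 < n)%N by apply: leq_trans hn.
have nrm : (`|w * n%:Z| = `|w| * n%:Z)%R by rewrite normrM.
split; [|split].
- move=> hlt; rewrite rat_lt // in hlt.
  have hD : (`|w * n%:Z| < m%:Z)%R by rewrite nrm.
  split. apply: (homw_nonempty hn hnm). by rewrite nrm.
  move=> f g hf hg; apply: (homw_connect hn hnm) hf hg; by rewrite nrm.
- case=> _ heq0; have heq := (rat_eq n m `|w|%R n0).1 heq0.
  have hw : (`|w * n%:Z| = m%:Z)%R by rewrite nrm.
  split; first by apply: (homw_card hn hnm); rewrite nrm.
  move=> f g hf hg; rewrite (homw_gc hn hnm _ hf) ?nrm // (homw_gc hn hnm _ hg) ?nrm // /hom_adj.
  case/orP => /(gc_arc hnm) -> //.
- move=> hgt; rewrite rat_gt // in hgt.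
  apply/setP => f; rewrite in_set0; apply/negP => hf.
  have := homw_bound hn hnm hf; rewrite nrm.
  move: hgt; clear; rewrite ltNge => /negP h1 h2; exact: h1.
Qed.
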